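(* Let $\mathcal A$ be a regular multiplier Hopf algebroid with a modular base weight $(\mu_B,\mu_C)$ and antipode $S$. Let $\phi$ be a left integral and $\psi$ a right integral for $(\mathcal A,\mu_B,\mu_C)$. Then for all $a\in A$, $x\in B$, $y\in C$: $$\phi(ya)=\phi(a\,S^2(y))\qquad\text{and}\qquad \psi(ax)=\psi(S^2(x)\,a).$$
   Context: A regular multiplier Hopf algebroid $\mathcal A=(A,B,C,S_B,S_C,\Delta_B,\Delta_C)$ (Timmermann–Van Daele) consists of a non-degenerate idempotent complex algebra $A$, non-degenerate idempotent commuting subalgebras $B,C\subseteq M(A)$, anti-isomorphisms $S_B:B\to C$, $S_C:C\to B$, a left comultiplication $\Delta_B$ and right comultiplication $\Delta_C$ satisfying the axioms of that notion; its antipode $S$ is an anti-automorphism of $A$ extending to $M(A)$ with $S|_B=S_B$, $S|_C=S_C$. ${}_BA\otimes A^B$ is the quotient of $A\otimes A$ by the span of $xa\otimes b-a\otimes S_B(x)b$; slice maps: for $\omega:A\to B$ with $\omega(xa)=x\omega(a)$, $\omega\otimes\iota:c\otimes d\mapsto S_B(\omega(c))d$; for $\omega:A\to B$ with $\omega(S_B(x)a)=\omega(a)x$, $\iota\otimes\omega:c\otimes d\mapsto\omega(d)c$. Partial right integral: linear ${}_B\psi_B:A\to B$ with ${}_B\psi_B(xax')=x{}_B\psi_B(a)x'$ and $({}_B\psi_B\otimes\iota)(\Delta_B(a)(1\otimes b))={}_B\psi_B(a)b$. Partial left integral: linear ${}_C\phi_C:A\to C$ with ${}_C\phi_C(yay')=y{}_C\phi_C(a)y'$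 and $(\iota\otimes S_B^{-1}\circ{}_C\phi_C)(\Delta_B(b)(a\otimes1))={}_C\phi_C(b)a$. A base weight is a pair $(\mu_B,\mu_C)$ of faithful linear functionals on $B$, $C$; it is modular if $\mu_B(xx')=\mu_B(x'\,S_B^{-1}S_C^{-1}(x))$ and $\mu_C(yy')=\mu_C(y'\,S_BS_C(y))$ for all $x,x'\in B$, $y,y'\in C$. A functional $\omega$ on $A$ is factorizable if there are linear ${}_B\omega,\omega_B:A\to B$, ${}_C\omega,\omega_C:A\to C$ with ${}_B\omega(xa)=x{}_B\omega(a)$, $\omega_B(ax)=\omega_B(a)x$, ${}_C\omega(ya)=y{}_C\omega(a)$, $\omega_C(ay)=\omega_C(a)y$ and $\omega=\mu_B\circ{}_B\omega=\mu_B\circ\omega_B=\mu_C\circ{}_C\omega=\mu_C\circ\omega_C$. A left integral is a factorizable functional $\mu_C\circ{}_C\phi_C$ with ${}_C\phi_C$ a partial left integral; a right integral is a factorizable functional $\mu_B\circ{}_B\psi_B$ with ${}_B\psi_B$ a partial right integral. *)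

(* Defs.v *)
From HB Require Import structures.
From Stdlib Require List.
From mathcomp Require Import all_boot all_order all_algebra.
Set Implicit Arguments.
Unset Strict Implicit.
Unset Printing Implicit Defensive.
Import GRing.Theory.
Local Open Scope ring_scope.

Section MHA.
Variables (K : fieldType) (A : lmodType K) (mul : A -> A -> A).

Definition alg_axioms : Prop :=
  [/\ (forall a b c, mul (mul a b) c = mul a (mul b c)),
      (forall (k : K) a a' b, mul (k *: a + a') b = k *: mul a b + mul a' b) &
      (forall (k : K) a b b', mul a (k *: b + b') = k *: mul a b + mul a b')].

Definition nondegenerate_alg : Prop :=
  (forall a, (forall b, mul a b = 0) -> a = 0) /\
  (forall a, (forall b, mul b a = 0) -> a = 0).

Definition idempotent_alg : Prop :=
  forall a, exists s : seq (A * A), a = \sum_(p <- s) mul p.1 p.2.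

Record mult := Mult { mL : A -> A ; mR : A -> A }.
(* mL m a = "m a",  mR m a = "a m" *)

Definition is_mult (m : mult) : Prop := forall a b, mul (mR m a) b = mul a (mL m b).

Definition mmul (m n : mult) : mult :=
  Mult (fun a => mL m (mL n a)) (fun a => mR n (mR m a)).
Definition madd (m n : mult) : mult :=
  Mult (fun a => mL m a + mL n a) (fun a => mR m a + mR n a).
Definition mscale (k : K) (m : mult) : mult :=
  Mult (fun a => k *: mL m a) (fun a => k *: mR m a).
Definition mzero : mult := Mult (fun _ => 0) (fun _ => 0).

Definition nd_idem_subalg (P : mult -> Prop) : Prop :=
  [/\ (forall x, P x -> is_mult x),
      P mzero /\ (forall x y, P x -> P y -> P (madd x y)) /\
      (forall k x, P x -> P (mscale k x)) /\ (forall x y, P x -> P y -> P (mmul x y)),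
      (forall x, P x -> (forall y, P y -> mmul x y = mzero) -> x = mzero) /\
      (forall x, P x -> (forall y, P y -> mmul y x = mzero) -> x = mzero),
      (forall x, P x -> exists s : seq (mult * mult),
          (forall p, List.In p s -> P p.1 /\ P p.2) /\
          x = \big[madd/mzero]_(p <- s) mmul p.1 p.2) &
      [/\ (forall a, exists s : seq (mult * A),
             (forall p, List.In p s -> P p.1) /\ a = \sum_(p <- s) mL p.1 p.2),
          (forall a, exists s : seq (mult * A),
             (forall p, List.In p s -> P p.1) /\ a = \sum_(p <- s) mR p.1 p.2),
          (forall a, (forall x, P x -> mL x a = 0) -> a = 0) &
          (forall a, (forall x, P x -> mR x a = 0) -> a = 0)]].

Definition anti_iso (P Q : mult -> Prop) (S : mult -> mult) : Prop :=
  [/\ (forall x, P x -> Q (S x)),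
      (forall y, Q y -> exists2 x, P x & S x = y),
      (forall x x', P x -> P x' -> S x = S x' -> x = x'),
      (forall k x x', P x -> P x' -> S (madd (mscale k x) x') = madd (mscale k (S x)) (S x')) &
      (forall x x', P x -> P x' -> S (mmul x x') = mmul (S x') (S x))].

(* Elements of the balanced tensor product  _B A (x) A^B  (quotient of A (x) A by
   xa (x) b - a (x) S_B(x) b) are given by representatives: finite formal sums.
   The slice maps used below are well defined on the quotient, so they may be
   evaluated on representatives.
     DBr a b  represents  Delta_B(a)(1 (x) b)
     DBl b a  represents  Delta_B(b)(a (x) 1)                                 *)
Record mha_data := MHAData {
  inB : mult -> Prop ;
  inC : mult -> Prop ;
  S_B : mult -> mult ;
  S_C : mult -> mult ;
  DBr : A -> A -> seq (A * A) ;
  DBl : A -> A -> seq (A * A) ;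
  antS : A -> A ;
  antSM : mult -> mult
}.

Variable H : mha_data.

Definition is_RMHA : Prop :=
  [/\ alg_axioms /\ nondegenerate_alg /\ idempotent_alg,
      nd_idem_subalg (inB H) /\ nd_idem_subalg (inC H),
      (forall x y, inB H x -> inC H y -> mmul x y = mmul y x),
      anti_iso (inB H) (inC H) (S_B H) /\ anti_iso (inC H) (inB H) (S_C H) &
      [/\ bijective (antS H),
          (forall (k : K) a b, antS H (k *: a + b) = k *: antS H a + antS H b),
          (forall a b, antS H (mul a b) = mul (antS H b) (antS H a)),
          (forall m, is_mult m -> is_mult (antSM H m) /\
             forall a, antS H (mL m a) = mR (antSM H m) (antS H a) /\
                       antS H (mR m a) = mL (antSM H m) (antS H a)) &
          (forall x, inB H x -> antSM H x = S_B H x) /\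
          (forall y, inC H y -> antSM H y = S_C H y)]].

Definition faithful_lin (P : mult -> Prop) (mu : mult -> K) : Prop :=
  [/\ (forall k x x', P x -> P x' -> mu (madd (mscale k x) x') = k * mu x + mu x'),
      (forall x, P x -> (forall x', P x' -> mu (mmul x x') = 0) -> x = mzero) &
      (forall x, P x -> (forall x', P x' -> mu (mmul x' x) = 0) -> x = mzero)].

(* modular: mu_B(x x') = mu_B(x' S_B^-1 S_C^-1 (x)), mu_C(y y') = mu_C(y' S_B S_C (y)).
   S_B^-1 S_C^-1 (x) is the unique z in B with S_C (S_B z) = x. *)
Definition modular_base_weight (muB muC : mult -> K) : Prop :=
  [/\ faithful_lin (inB H) muB, faithful_lin (inC H) muC,
      (forall x x' z, inB H x -> inB H x' -> inB H z -> S_C H (S_B H z) = x ->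
          muB (mmul x x') = muB (mmul x' z)) &
      (forall y y', inC H y -> inC H y' ->
          muC (mmul y y') = muC (mmul y' (S_B H (S_C H y))))].

Definition lin_fun (f : A -> K) : Prop :=
  forall (k : K) a b, f (k *: a + b) = k * f a + f b.
Definition lin_mult (f : A -> mult) : Prop :=
  forall (k : K) a b, f (k *: a + b) = madd (mscale k (f a)) (f b).

Definition factorizable (muB muC : mult -> K) (w : A -> K) : Prop :=
  exists bw wb cw wc : A -> mult,
    [/\ [/\ lin_mult bw, lin_mult wb, lin_mult cw & lin_mult wc],
        [/\ forall a, inB H (bw a), forall a, inB H (wb a),
            forall a, inC H (cw a) & forall a, inC H (wc a)],
        [/\ forall x a, inB H x -> bw (mL x a) = mmul x (bw a),
            forall x a, inB H x -> wb (mR x a) = mmul (wb a) x,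
            forall y a, inC H y -> cw (mL y a) = mmul y (cw a) &
            forall y a, inC H y -> wc (mR y a) = mmul (wc a) y] &
        forall a, [/\ w a = muB (bw a), w a = muB (wb a),
                      w a = muC (cw a) & w a = muC (wc a)]].

Definition partial_right_integral (p : A -> mult) : Prop :=
  [/\ lin_mult p, (forall a, inB H (p a)),
      (forall x x' a, inB H x -> inB H x' ->
          p (mL x (mR x' a)) = mmul (mmul x (p a)) x') &
      (* (psi (x) id)(Delta_B(a)(1 (x) b)) = psi(a) b, slice c(x)d |-> S_B(psi c) d *)
      (forall a b, \sum_(q <- DBr H a b) mL (S_B H (p q.1)) q.2 = mL (p a) b)].

Definition partial_left_integral (p : A -> mult) : Prop :=
  [/\ lin_mult p, (forall a, inC H (p a)),
      (forall y y' a, inC H y -> inC H y' ->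
          p (mL y (mR y' a)) = mmul (mmul y (p a)) y') &
      (* (id (x) S_B^-1 o phi)(Delta_B(b)(a (x) 1)) = phi(b) a,
         slice c(x)d |-> w(d) c  with  w(d) = S_B^-1(phi d) *)
      (forall b a (w : A -> mult),
          (forall d, inB H (w d) /\ S_B H (w d) = p d) ->
          \sum_(q <- DBl H b a) mL (w q.2) q.1 = mL (p b) a)].

Definition left_integral (muB muC : mult -> K) (phi : A -> K) : Prop :=
  factorizable muB muC phi /\
  exists p, partial_left_integral p /\ forall a, phi a = muC (p a).

Definition right_integral (muB muC : mult -> K) (psi : A -> K) : Prop :=
  factorizable muB muC psi /\
  exists p, partial_right_integral p /\ forall a, psi a = muB (p a).

End MHA.

(* Main.v *)
Require Import Defs.
From HB Require Import structures.
From mathcomp Require Import all_boot all_order all_algebra.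
From Stdlib Require List.
Set Implicit Arguments.
Unset Strict Implicit.
Unset Printing Implicit Defensive.
Import GRing.Theory.
Local Open Scope ring_scope.

Section Aux.
Variables (K : fieldType) (A : lmodType K) (mul : A -> A -> A).
Hypothesis halg : alg_axioms mul.
Hypothesis hnd : nondegenerate_alg mul.
Let hA : forall a b c, mul (mul a b) c = mul a (mul b c).
Proof. by case: halg. Qed.
Let hL : forall (k : K) a a' b, mul (k *: a + a') b = k *: mul a b + mul a' b.
Proof. by case: halg. Qed.
Let hR : forall (k : K) a b b', mul a (k *: b + b') = k *: mul a b + mul a b'.
Proof. by case: halg. Qed.
Let hn1 : forall a, (forall b, mul a b = 0) -> a = 0.
Proof. by case: hnd. Qed.
Let hn2 : forall a, (forall b, mul b a = 0) -> a = 0.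
Proof. by case: hnd. Qed.

Lemma mulDl a a' b : mul (a + a') b = mul a b + mul a' b.
Proof. by have := hL 1 a a' b; rewrite !scale1r. Qed.
Lemma mulDr a b b' : mul a (b + b') = mul a b + mul a b'.
Proof. by have := hR 1 a b b'; rewrite !scale1r. Qed.
Lemma mulA a b c : mul (mul a b) c = mul a (mul b c).
Proof. exact: hA. Qed.

Lemma mulNr a b : mul a (- b) = - mul a b.
Proof.
apply/eqP; rewrite -addr_eq0 addrC -mulDr subrr.
have h : mul a 0 = mul a 0 + mul a 0 by rewrite -mulDr addr0.
by apply/eqP; apply: (addrI (mul a 0)); rewrite -h addr0.
Qed.
Lemma mulNl a b : mul (- a) b = - mul a b.
Proof.
apply/eqP; rewrite -addr_eq0 addrC -mulDl subrr.
have h : mul 0 b = mul 0 b + mul 0 b by rewrite -mulDl addr0.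
by apply/eqP; apply: (addrI (mul 0 b)); rewrite -h addr0.
Qed.

Lemma inj_r X Y : (forall c, mul c X = mul c Y) -> X = Y.
Proof.
move=> h; apply/eqP; rewrite -subr_eq0; apply/eqP.
apply: hn2 => c; by rewrite mulDr mulNr h subrr.
Qed.
Lemma inj_l X Y : (forall c, mul X c = mul Y c) -> X = Y.
Proof.
move=> h; apply/eqP; rewrite -subr_eq0; apply/eqP.
apply: hn1 => c; by rewrite mulDl mulNl h subrr.
Qed.

Variable m : mult A.
Hypothesis hm : is_mult mul m.

Lemma mLD a b : mL m (a + b) = mL m a + mL m b.
Proof. apply: inj_r => c; by rewrite -hm !mulDr -!hm. Qed.
Lemma mRD a b : mR m (a + b) = mR m a + mR m b.
Proof. apply: inj_l => c; by rewrite hm !mulDl !hm. Qed.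
Lemma mL0 : mL m 0 = 0.
Proof.
have h : mL m 0 = mL m 0 + mL m 0 by rewrite -mLD addr0.
by apply: (addrI (mL m 0)); rewrite -h addr0.
Qed.
Lemma mR0 : mR m 0 = 0.
Proof.
have h : mR m 0 = mR m 0 + mR m 0 by rewrite -mRD addr0.
by apply: (addrI (mR m 0)); rewrite -h addr0.
Qed.
Lemma mRmul a b : mR m (mul a b) = mul a (mR m b).
Proof. apply: inj_l => c; by rewrite hm !mulA hm. Qed.

Lemma mR_sum (T : Type) (s : seq T) (G : T -> A) :
  mR m (\sum_(p <- s) G p) = \sum_(p <- s) mR m (G p).
Proof.
elim: s => [|x s IH]; first by rewrite !big_nil mR0.
by rewrite !big_cons mRD IH.
Qed.

End Aux.

Lemma comm_LR (K : fieldType) (A : lmodType K) (mul : A -> A -> A) u v a :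
  alg_axioms mul -> nondegenerate_alg mul -> is_mult mul u -> is_mult mul v ->
  mL u (mR v a) = mR v (mL u a).
Proof.
move=> ha hn hu hv; apply: (inj_r ha hn) => c.
by rewrite -hu -(mRmul ha hn hv) hu (mRmul ha hn hv).
Qed.

Lemma sum_vanish (K : fieldType) (A : lmodType K) (T : Type) (f : A -> K)
  (s : seq T) (G : T -> A) :
  (forall a b, f (a + b) = f a + f b) -> f 0 = 0 ->
  (forall p, List.In p s -> f (G p) = 0) -> f (\sum_(p <- s) G p) = 0.
Proof.
move=> hD h0; elim: s => [|x s IH] hs; first by rewrite big_nil.
rewrite big_cons hD hs /=; last by left.
by rewrite IH ?addr0 // => p hp; apply: hs; right.
Qed.

Lemma vanish (K : fieldType) (A : lmodType K) (mul : A -> A -> A)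
  (P : mult A -> Prop) (f : A -> K) :
  alg_axioms mul -> nondegenerate_alg mul ->
  (forall x, P x -> is_mult mul x) ->
  (forall a, exists s : seq (mult A * A),
             (forall p, List.In p s -> P p.1) /\ a = \sum_(p <- s) mL p.1 p.2) ->
  (forall a, exists s : seq (mult A * A),
             (forall p, List.In p s -> P p.1) /\ a = \sum_(p <- s) mR p.1 p.2) ->
  (forall a b, f (a + b) = f a + f b) -> f 0 = 0 ->
  (forall u v c, P u -> P v -> f (mL u (mR v c)) = 0) ->
  forall a, f a = 0.
Proof.
move=> ha hn hP hdL hdR hD h0 hb.
have step : forall b v, P v -> f (mR v b) = 0.
  move=> b v hv; have [s [hs ->]] := hdL b.
  rewrite (mR_sum ha hn (hP _ hv)); apply: sum_vanish => // p hp.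
  rewrite -(comm_LR _ ha hn (hP _ (hs _ hp)) (hP _ hv)).
  exact: hb (hs _ hp) hv.
move=> a; have [s [hs ->]] := hdR a.
apply: sum_vanish => // p hp; exact: step (hs _ hp).
Qed.

Theorem lemma4p10 (K : fieldType) (A : lmodType K) (mul : A -> A -> A)
  (H : mha_data A) (muB muC : mult A -> K) (phi psi : A -> K) :
  is_RMHA mul H -> modular_base_weight H muB muC ->
  left_integral H muB muC phi -> right_integral H muB muC psi ->
  forall (a : A) (x y : mult A), inB H x -> inC H y ->
    phi (mL y a) = phi (mR (antSM H (antSM H y)) a) /\
    psi (mR x a) = psi (mL (antSM H (antSM H x)) a).
Proof.
move=> [[ha [hn _]] [hB hC] _ [aB aC] [_ _ _ _ [eSB eSC]]].
move=> [[linB _ _] [linC _ _] modB modC].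
move=> [_ [p [[plin pC pmod _] phip]]] [_ [q [[qlin qB qmod _] psiq]]].
move=> a x y hx hy.
case: hB => hBm [_ [_ [_ hBmul]]] _ _ [hBdL hBdR _ _].
case: hC => hCm [_ [_ [_ hCmul]]] _ _ [hCdL hCdR _ _].
case: aB => aBmap _ _ _ _; case: aC => aCmap _ _ _ _.
have phiD : forall a b, phi (a + b) = phi a + phi b.
  move=> a1 b1; rewrite -[a1]scale1r !phip plin linC ?pC // mul1r.
  by rewrite scale1r.
have psiD : forall a b, psi (a + b) = psi a + psi b.
  move=> a1 b1; rewrite -[a1]scale1r !psiq qlin linB ?qB // mul1r.
  by rewrite scale1r.
have phi0 : phi 0 = 0.
  by apply: (addrI (phi 0)); rewrite -phiD !addr0.
have psi0 : psi 0 = 0.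
  by apply: (addrI (psi 0)); rewrite -psiD !addr0.
split.
- rewrite (eSC y hy) (eSB (S_C H y)); last by apply: aCmap.
  set z := S_B H (S_C H y).
  have hz : inC H z by apply: aBmap; apply: aCmap.
  apply/eqP; rewrite -subr_eq0; apply/eqP.
  pose f := fun a => phi (mL y a) - phi (mR z a).
  change (f a = 0).
  apply: (vanish ha hn hCm hCdL hCdR).
  + move=> a1 b1; rewrite /f (mLD ha hn (hCm _ hy)) (mRD ha hn (hCm _ hz)).
    by rewrite !phiD opprD addrACA.
  + by rewrite /f (mL0 ha hn (hCm _ hy)) (mR0 ha hn (hCm _ hz)) phi0 subrr.
  move=> u v c hu hv; rewrite /f.
  rewrite -(comm_LR _ ha hn (hCm _ hu) (hCm _ hz)).
  have -> : mL y (mL u (mR v c)) = mL (mmul y u) (mR v c) by [].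
  have -> : mR z (mR v c) = mR (mmul v z) c by [].
  have h1 := hCmul _ _ hy hu; have h2 := hCmul _ _ hv hz.
  rewrite !phip !pmod //.
  have -> : mmul (mmul (mmul y u) (p c)) v = mmul y (mmul (mmul u (p c)) v) by [].
  rewrite (modC y) //; last by apply: (hCmul) => //; apply: (hCmul).
  by rewrite subrr.
- rewrite (eSB x hx) (eSC (S_B H x)); last by apply: aBmap.
  set w := S_C H (S_B H x).
  have hw : inB H w by apply: aCmap; apply: aBmap.
  apply/eqP; rewrite -subr_eq0; apply/eqP.
  pose f := fun a => psi (mR x a) - psi (mL w a).
  change (f a = 0).
  apply: (vanish ha hn hBm hBdL hBdR).
  + move=> a1 b1; rewrite /f (mLD ha hn (hBm _ hw)) (mRD ha hn (hBm _ hx)).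
    by rewrite !psiD opprD addrACA.
  + by rewrite /f (mL0 ha hn (hBm _ hw)) (mR0 ha hn (hBm _ hx)) psi0 subrr.
  move=> u v c hu hv; rewrite /f.
  rewrite -(comm_LR _ ha hn (hBm _ hu) (hBm _ hx)).
  have -> : mL w (mL u (mR v c)) = mL (mmul w u) (mR v c) by [].
  have -> : mR x (mR v c) = mR (mmul v x) c by [].
  have h1 := hBmul _ _ hw hu; have h2 := hBmul _ _ hv hx.
  rewrite !psiq !qmod //.
  have -> : mmul (mmul (mmul w u) (q c)) v = mmul w (mmul (mmul u (q c)) v) by [].
  rewrite (modB w (mmul (mmul u (q c)) v) x) //; last by apply: (hBmul) => //; apply: (hBmul).
  by rewrite subrr.
Qed.
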